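(* For every $k\ge 1$ and every collection $\Omega$ of functions, $$\rho_1\bigl(\mathsf{vwl}_k^{(\infty)}\bigr)=\rho_1\bigl(\mathsf{TL}_{k+1}(\Omega)\bigr).$$
   Context: Fix integers $n\ge 1$ and $\ell\ge 1$. A graph is a triple $G=(V_G,E_G,\mathrm{col}_G)$ with $V_G=[n]=\{1,\dots,n\}$, $E_G$ a set of unordered pairs of distinct vertices (undirected, no loops), and a vertex labelling $\mathrm{col}_G:V_G\to\mathbb R^\ell$; $N_G(v)=\{u:uv\in E_G\}$. Let $\mathcal G=\mathcal G_0$ be the set of all such graphs and, for $s\ge 1$, $\mathcal G_s=\{(G,\mathbf v):G\in\mathcal G,\ \mathbf v\in V_G^s\}$. Tensor language $\mathsf{TL}(\Omega)$: let $\Omega$ be a collection of functions, each of the form $f:\mathbb R^p\to\mathbb R$ for some $p\ge1$ depending on $f$. Expressions are generated by $\varphi::=\mathbf 1_{x=y}\mid \mathbf 1_{x\neq y}\mid E(x,y)\mid P_s(x)\mid \varphi\cdot\varphi\mid \varphi+\varphi\mid a\cdot\varphi\mid f(\varphi_1,\dots,\varphi_p)\mid \sum_x\varphi$, with $x,y$ index variables, $s\in[\ell]$, $a\in\mathbb R$, $f\in\Omega$ of arity $p$. Free variables: $\mathrm{free}(\mathbf 1_{x\,\mathrm{op}\,y})=\mathrm{free}(E(x,y))=\{x,y\}$, $\mathrm{free}(P_s(x))=\{x\}$; for $\varphi_1\cdot\varphi_2$, $\varphi_1+\varphi_2$, $f(\varphi_1,\dots,\varphi_p)$ the union of the components' free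 variables; $\mathrm{free}(a\cdot\varphi)=\mathrm{free}(\varphi)$; $\mathrm{free}(\sum_x\varphi)=\mathrm{free}(\varphi)\setminus\{x\}$. Semantics: for a graph $G$ and a valuation $\nu$ mapping variables to $V_G$: $[\![E(x,y)]\!]^\nu_G=1$ if $\nu(x)\nu(y)\in E_G$ and $0$ otherwise; $[\![P_s(x)]\!]^\nu_G=\mathrm{col}_G(\nu(x))_s$; $[\![\mathbf 1_{x\,\mathrm{op}\,y}]\!]^\nu_G=1$ if $\nu(x)\,\mathrm{op}\,\nu(y)$ and $0$ otherwise; $\cdot$, $+$, scalar multiplication and $f$ act on the values of the components; $[\![\sum_x\varphi]\!]^\nu_G=\sum_{v\in V_G}[\![\varphi]\!]^{\nu[x\mapsto v]}_G$. For $\varphi$ with free variables among $x_1,\dots,x_s$ and $\mathbf v\in V_G^s$, $[\![\varphi]\!]^{\mathbf v}_G$ denotes the value under $x_i\mapsto v_i$. Summation depth $\mathrm{sd}$: $0$ for atoms, maximum over the components for $\cdot$, $+$, $f(\dots)$, $\mathrm{sd}(a\cdot\varphi)=\mathrm{sd}(\varphi)$, $\mathrm{sd}(\sum_x\varphi)=\mathrm{sd}(\varphi)+1$. $\mathsf{TL}_k(\Omega)$ is the set of expressions in which only variables from $\{x_1,\dots,x_k\}$ occur (free or bound; variables may be re-bound), and $\mathsf{TL}_k^{(t)}(\Omega)$ its subset of summation depth at most $t$. Separation power: for a set $\mathcal F$ of functions $f:\mathcal G_s\to\mathbb R^{m_f}$, $\rho_s(\mathcal F)=\{((G,\mathbf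 v),(H,\mathbf w))\in\mathcal G_s\times\mathcal G_s: f(G,\mathbf v)=f(H,\mathbf w)\ \forall f\in\mathcal F\}$ (for $s=0$, pairs of graphs), and $\rho_s(f)=\rho_s(\{f\})$. For a set $\mathcal L$ of expressions, $\rho_s(\mathcal L)$ is the set of pairs with $[\![\varphi]\!]^{\mathbf v}_G=[\![\varphi]\!]^{\mathbf w}_H$ for all $\varphi\in\mathcal L$ whose free variables are among $x_1,\dots,x_s$ (for $s=0$: all closed expressions in $\mathcal L$). $k$-dimensional Weisfeiler–Leman ($k\ge1$): for $\mathbf v\in V_G^k$, the atomic type $\mathsf{atp}_k(G,\mathbf v)$ records, for all $1\le i<j\le k$, whether $v_i=v_j$ and whether $v_iv_j\in E_G$, together with $\mathrm{col}_G(v_i)$ for all $i\in[k]$. Set $\mathsf{wl}_k^{(0)}(G,\mathbf v)=\mathsf{atp}_k(G,\mathbf v)$ and $\mathsf{wl}_k^{(t+1)}(G,\mathbf v)=\bigl(\mathsf{wl}_k^{(t)}(G,\mathbf v),\{\!\{(\mathsf{atp}_{k+1}(G,(v_1,\dots,v_k,u)),\mathsf{wl}_k^{(t)}(G,\mathbf v[u/1]),\dots,\mathsf{wl}_k^{(t)}(G,\mathbf v[u/k])):u\in V_G\}\!\}\bigr)$, where $\mathbf v[u/i]$ replaces the $i$-th entry of $\mathbf v$ by $u$ and $\{\!\{\cdot\}\!\}$ denotes a multiset. Labels are compared as formal objects across graphs. $\mathsf{vwl}_k^{(t)}(G,v)=\mathsf{wl}_k^{(t)}(G,(v,\dots,v))$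 and $\mathsf{gwl}_k^{(t)}(G)=\{\!\{\mathsf{wl}_k^{(t)}(G,\mathbf v):\mathbf v\in V_G^k\}\!\}$. $\rho_1(\mathsf{vwl}_k^{(t)})$ is the set of pairs $((G,v),(H,w))$ with $\mathsf{vwl}_k^{(t)}(G,v)=\mathsf{vwl}_k^{(t)}(H,w)$, and $\rho_1(\mathsf{vwl}_k^{(\infty)})=\bigcap_{t\ge0}\rho_1(\mathsf{vwl}_k^{(t)})$ (the stable labelling). *)

(* Defs.v *)
From Stdlib Require Import Reals.
From mathcomp Require Import all_boot.

Set Implicit Arguments.
Unset Strict Implicit.
Unset Printing Implicit Defensive.

(* E_G is a set of unordered pairs of distinct vertices: encoded as a
   symmetric irreflexive boolean relation on 'I_n. *)
Record graph (n l : nat) := Graph {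
  adj : rel 'I_n;
  adj_sym : forall u v, adj u v = adj v u;
  adj_irr : forall u, adj u u = false;
  col : 'I_n -> 'I_l -> R
}.

(* Omega is given as an indexed family: index type I, arity ar o (>= 1,
   imposed in the theorem), and the function F o : R^(ar o) -> R.
   Expressions of TL_m(Omega) use only the variables x_1..x_m, represented
   by 'I_m (x_{j+1} is the ordinal j); labels P_s with s in [l] use 'I_l. *)
Section TL.
Variables (I : Type) (ar : I -> nat) (l : nat).

Inductive expr (m : nat) : Type :=
| EEq    : 'I_m -> 'I_m -> expr m
| ENeq   : 'I_m -> 'I_m -> expr m
| EEdge  : 'I_m -> 'I_m -> expr m
| ELab   : 'I_l -> 'I_m -> expr m
| EMul   : expr m -> expr m -> expr m
| EAdd   : expr m -> expr m -> expr m
| EScale : R -> expr m -> expr m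
| EApp   : forall o : I, ('I_(ar o) -> expr m) -> expr m
| ESum   : 'I_m -> expr m -> expr m.

Fixpoint freeb m (e : expr m) (z : 'I_m) : bool :=
  match e with
  | EEq x y | ENeq x y | EEdge x y => (z == x) || (z == y)
  | ELab _ x => z == x
  | EMul a b | EAdd a b => freeb a z || freeb b z
  | EScale _ a => freeb a z
  | EApp o args => [exists j : 'I_(ar o), freeb (args j) z]
  | ESum x a => (z != x) && freeb a z
  end.

Variable F : forall o : I, ('I_(ar o) -> R) -> R.

Definition upd n m (nu : 'I_m -> 'I_n) (x : 'I_m) (v : 'I_n) : 'I_m -> 'I_n :=
  fun z => if z == x then v else nu z.

Fixpoint eval n m (G : graph n l) (e : expr m) (nu : 'I_m -> 'I_n) : R :=
  match e with
  | EEq x y => if nu x == nu y then R1 else R0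
  | ENeq x y => if nu x != nu y then R1 else R0
  | EEdge x y => if adj G (nu x) (nu y) then R1 else R0
  | ELab s x => col G (nu x) s
  | EMul a b => Rmult (eval G a nu) (eval G b nu)
  | EAdd a b => Rplus (eval G a nu) (eval G b nu)
  | EScale c a => Rmult c (eval G a nu)
  | EApp o args => F (fun j => eval G (args j) nu)
  | ESum x a => \big[Rplus/R0]_(v : 'I_n) eval G a (upd nu x v)
  end.

End TL.

Section WL.
Variables (n l : nat).

Definition atp k (G : graph n l) (v : 'I_k -> 'I_n) :
  {ffun 'I_k * 'I_k -> bool * bool} * {ffun 'I_k -> {ffun 'I_l -> R}} :=
  ([ffun ij : 'I_k * 'I_k =>
      if (ij.1 < ij.2)%N then (v ij.1 == v ij.2, adj G (v ij.1) (v ij.2))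
      else (false, false)],
   [ffun i => [ffun s => col G (v i) s]]).

Definition snoc k (v : 'I_k -> 'I_n) (u : 'I_n) : 'I_k.+1 -> 'I_n :=
  fun i => if (insub (nat_of_ord i) : option 'I_k) is Some j then v j else u.

Definition repl k (v : 'I_k -> 'I_n) (i : 'I_k) (u : 'I_n) : 'I_k -> 'I_n :=
  fun j => if j == i then u else v j.

(* wl_eq k t G v H w  <->  wl_k^(t)(G,v) = wl_k^(t)(H,w).
   Equality of the multisets {{ (atp_{k+1}(G,vu), wl^(t)(G,v[u/1]),...,
   wl^(t)(G,v[u/k])) : u in V_G }} is unfolded literally: there is a
   bijection sigma : V_G -> V_H matching each element u with an element
   sigma u carrying the same label. *)
Fixpoint wl_eq k (t : nat) (G : graph n l) (v : 'I_k -> 'I_n)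
    (H : graph n l) (w : 'I_k -> 'I_n) : Prop :=
  match t with
  | 0 => atp G v = atp H w
  | t'.+1 =>
      wl_eq t' G v H w /\
      exists sigma : 'I_n -> 'I_n, bijective sigma /\
        forall u : 'I_n,
          atp G (snoc v u) = atp H (snoc w (sigma u)) /\
          forall i : 'I_k, wl_eq t' G (repl v i u) H (repl w i (sigma u))
  end.

(* ((G,v),(H,w)) in rho_1(vwl_k^(infinity)) *)
Definition vwl_inf_eq k (G : graph n l) (v : 'I_n) (H : graph n l) (w : 'I_n) : Prop :=
  forall t, wl_eq t G (fun _ : 'I_k => v) H (fun _ : 'I_k => w).

End WL.

(* ((G,v),(H,w)) in rho_1(TL_m(Omega)): all expressions whose free variables
   are among {x_1} (= ord0) agree, evaluated with x_1 |-> v (resp. w).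
   The valuation sends every variable to v; only x_1 is free, so this is
   the value [[phi]]^v_G. *)
Definition TL_eq (I : Type) (ar : I -> nat) (F : forall o : I, ('I_(ar o) -> R) -> R)
    (n l m : nat) (G : graph n l) (v : 'I_n) (H : graph n l) (w : 'I_n) : Prop :=
  forall e : expr ar l m.+1,
    (forall z, freeb e z -> z == ord0) ->
    eval F G e (fun _ => v) = eval F H e (fun _ => w).

(* Main.v *)
From HB Require Import structures.
Require Import Defs.
From Stdlib Require Import Reals Classical Lia Lra ClassicalEpsilon FunctionalExtensionality.
From mathcomp Require Import all_boot all_fingroup.
Set Implicit Arguments.
Unset Strict Implicit.
Unset Printing Implicit Defensive.


Lemma Rplus_assoc' : associative Rplus. Proof. move=> x y z; by rewrite Rplus_assoc. Qed.
HB.instance Definition _ := Monoid.isComLaw.Build R R0 Rplus Rplus_assoc' Rplus_comm Rplus_0_l.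

Definition tb (P : Prop) : bool := if excluded_middle_informative P then true else false.
Lemma tbP P : reflect P (tb P).
Proof. rewrite /tb; case: excluded_middle_informative => h; by constructor. Qed.
Lemma tb_iff (P : Prop) (b : bool) : (P <-> b) -> tb P = b.
Proof. move=> h; apply/idP/idP => [/tbP/h|/h/tbP] //. Qed.

Section Basic.
Variables (n l : nat).

Definition atpP m (X : graph n l) (a : 'I_m -> 'I_n) (Y : graph n l) (b : 'I_m -> 'I_n) :=
  (forall i j, (a i == a j) = (b i == b j) /\ adj X (a i) (a j) = adj Y (b i) (b j)) /\
  (forall i s, col X (a i) s = col Y (b i) s).

Lemma atp_atpP m X (a : 'I_m -> 'I_n) Y b : atp X a = atp Y b <-> atpP X a Y b.
Proof.
split.
- move=> [h1 h2]; split.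
  + have key : forall i j : 'I_m, (i < j)%N -> (a i == a j) = (b i == b j) /\ adj X (a i) (a j) = adj Y (b i) (b j).
      move=> i j ij; move/ffunP: h1 => /(_ (i, j)); rewrite !ffunE /= ij; by case=> -> ->.
    move=> i j; case: (ltngtP i j) => [ij|ji|/val_inj ->].
    * exact: key.
    * have [e1 e2] := key _ _ ji; by rewrite eq_sym e1 eq_sym adj_sym e2 adj_sym.
    * by rewrite !eqxx !adj_irr.
  + move=> i s; move/ffunP: h2 => /(_ i) /ffunP /(_ s); by rewrite !ffunE.
- move=> [h1 h2]; congr pair; apply/ffunP => x; rewrite !ffunE.
  + case: ifP => // _; by have [-> ->] := h1 x.1 x.2.
  + apply/ffunP => s; by rewrite !ffunE h2.
Qed.

Lemma atpP_comp m m' X (a : 'I_m -> 'I_n) Y b (p : 'I_m' -> 'I_m) :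
  atpP X a Y b -> atpP X (a \o p) Y (b \o p).
Proof. move=> [h1 h2]; split => [i j|i s] /=; [exact: h1|exact: h2]. Qed.

Lemma atpP_sym m X (a : 'I_m -> 'I_n) Y b : atpP X a Y b -> atpP Y b X a.
Proof. move=> [h1 h2]; split => [i j|i s]; [by have [-> ->] := h1 i j|by rewrite h2]. Qed.

Variable k : nat.
Notation E := (@wl_eq n l k).

Lemma E_mono t X a Y b : E t.+1 X a Y b -> E t X a Y b.
Proof. by case. Qed.

Lemma E_monoN t t' X a Y b : (t <= t')%N -> E t' X a Y b -> E t X a Y b.
Proof.
move=> le; elim: t' le => [|t' IH]; first by rewrite leqn0 => /eqP ->.
rewrite leq_eqVlt => /orP [/eqP -> //|lt] h; apply: IH => //; exact: E_mono.
Qed.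

Lemma E_refl t X a : E t X a X a.
Proof.
elim: t a => [|t IH] a //=; split => //; exists id; split; first exact: (Bijective (g:=id)).
by move=> u; split.
Qed.

Lemma E_sym t X a Y b : E t X a Y b -> E t Y b X a.
Proof.
elim: t a b => [|t IH] a b /=; first by move->.
move=> [h [s [[g sg gs] hs]]]; split; first exact: IH.
exists g; split; first exact: (Bijective gs sg).
move=> u; have [h1 h2] := hs (g u); rewrite gs in h1 h2; split => [|i]; first by rewrite h1.
exact: IH.
Qed.

Lemma E_trans t X a Y b Z c : E t X a Y b -> E t Y b Z c -> E t X a Z c.
Proof.
elim: t a b c => [|t IH] a b c /=; first by move=> -> ->.
move=> [h [s [bs hs]]] [h' [s' [bs' hs']]]; split; first exact: IH h h'.
exists (s' \o s); split; first exact: bij_comp.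
move=> u; have [h1 h2] := hs u; have [h1' h2'] := hs' (s u); split; first by rewrite h1 h1'.
move=> i; exact: IH (h2 i) (h2' i).
Qed.

Definition extp (p : 'I_k -> 'I_k) (i : 'I_k.+1) : 'I_k.+1 :=
  if (insub (nat_of_ord i) : option 'I_k) is Some j then widen_ord (leqnSn k) (p j) else ord_max.

Lemma snoc_comp (a : 'I_k -> 'I_n) u (p : 'I_k -> 'I_k) :
  snoc (a \o p) u =1 snoc a u \o extp p.
Proof.
move=> i; rewrite /snoc /extp /=; case: insubP => [j _ _|_] /=.
- by rewrite insubT ?ltn_ord // => h; congr a; apply: val_inj.
- by rewrite insubF //= ltnn.
Qed.

Lemma E_perm t X a Y b (p : 'I_k -> 'I_k) : injective p ->
  E t X a Y b -> E t X (a \o p) Y (b \o p).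
Proof.
move=> ip; elim: t a b => [|t IH] a b /=.
- move/atp_atpP => h; apply/atp_atpP; exact: atpP_comp.
- move=> [h [s [bs hs]]]; split; first exact: IH.
  exists s; split => // u; have [h1 h2] := hs u; split.
  + apply/atp_atpP; have := h1; move/atp_atpP/(atpP_comp (extp p)).
    have e1 := functional_extensionality _ _ (snoc_comp a u p).
    have e2 := functional_extensionality _ _ (snoc_comp b (s u) p).
    by rewrite -e1 -e2.
  + move=> i; have := IH _ _ (h2 (p i)).
    have r : forall (c : 'I_k -> 'I_n) v, repl (c \o p) i v = repl c (p i) v \o p.
      move=> c v; apply: functional_extensionality => j; by rewrite /repl /= (inj_eq ip).
    by rewrite !r.
Qed.

End Basic.

Lemma miss_codom k (f : 'I_k -> 'I_k.+1) : injective f -> exists c, forall i, f i != c.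
Proof.
move=> fi; apply: NNPP => hn.
have hall : forall c, c \in codom f.
  move=> c; apply: NNPP => hc; apply: hn; exists c => i; apply/eqP => e; apply: hc.
  by rewrite -e codom_f.
have h1 : #|codom f| = #|'I_k.+1| by apply: eq_card => c; rewrite hall.
move: h1; rewrite card_codom // !card_ord; lia.
Qed.

Section PartA.
Variables (n l k : nat) (I : Type) (ar : I -> nat) (F : forall o : I, ('I_(ar o) -> R) -> R).
Variables (G H : graph n l).
Notation E := (@wl_eq n l k).

Definition Rr t (nu mu : 'I_k.+1 -> 'I_n) :=
  atpP G nu H mu /\ forall p : 'I_k -> 'I_k.+1, injective p -> E t G (nu \o p) H (mu \o p).

Lemma Rr_mono t t' nu mu : (t <= t')%N -> Rr t' nu mu -> Rr t nu mu.
Proof. move=> le [h1 h2]; split=> // p ip; exact: E_monoN le (h2 p ip). Qed.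

Lemma Rr_sum t nu mu j : Rr t.+1 nu mu ->
  exists s : 'I_n -> 'I_n, bijective s /\ forall u, Rr t (upd nu j u) (upd mu j (s u)).
Proof.
move=> [ha hE]; have := hE (lift j) (@lift_inj _ j) => -[_ [s [bs hs]]].
exists s; split=> // u; have [h1 h2] := hs u; split.
- pose q (z : 'I_k.+1) : 'I_k.+1 :=
    if unlift j z is Some i then widen_ord (leqnSn k) i else ord_max.
  have e : forall (c : 'I_k.+1 -> 'I_n) v, upd c j v = snoc (c \o lift j) v \o q.
    move=> c v; apply: functional_extensionality => z; rewrite /upd /q /snoc /=.
    case: unliftP => [i ->|->]; last by rewrite eqxx insubF //= ltnn.
    rewrite eq_sym (negbTE (neq_lift _ _)) insubT ?ltn_ord //= => hh.
    by congr (c (lift j _)); apply: val_inj.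
  rewrite !e; apply: atpP_comp; exact/atp_atpP.
- move=> p ip.
  case: (boolP [exists i, p i == j]) => [/existsP [i0 /eqP pi0]|hno].
  + have [c hc] := miss_codom ip.
    have cj : c != j by apply/eqP => e; move: (hc i0); rewrite pi0 e eqxx.
    case: (unliftP j c) (cj) => [i' ci|->]; last by rewrite eqxx.
    move=> _.
    pose pi (z : 'I_k) : 'I_k := if unlift j (p z) is Some w then w else i'.
    have piE1 : pi i0 = i'.
      by rewrite /pi pi0 unlift_none.
    have piE2 : forall z (h : z != i0), lift j (pi z) = p z.
      move=> z h; rewrite /pi; case: (unliftP j (p z)) => [w e|e] //.
      by move: h; rewrite -(inj_eq ip) pi0 -e eqxx.
    have pine : forall z, z != i0 -> pi z != i'.
      move=> z h; apply/eqP => e; move: (hc z); rewrite -(piE2 _ h) e ci eqxx //.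
    have pinj : injective pi.
      move=> z1 z2; case: (eqVneq z1 i0) => [->|g1]; case: (eqVneq z2 i0) => [->|g2] //.
      * by rewrite piE1 => e; move: (pine _ g2); rewrite e eqxx.
      * by rewrite piE1 => e; move: (pine _ g1); rewrite e eqxx.
      * by move=> e; apply: ip; rewrite -(piE2 _ g1) -(piE2 _ g2) e.
    have key : forall (c0 : 'I_k.+1 -> 'I_n) v, upd c0 j v \o p = repl (c0 \o lift j) i' v \o pi.
      move=> c0 v; apply: functional_extensionality => z; rewrite /upd /repl /=.
      case: (eqVneq z i0) => [->|h]; first by rewrite pi0 eqxx piE1 eqxx.
      rewrite (negbTE (pine _ h)) piE2 //; case: eqP => // e.
      by move: h; rewrite -(inj_eq ip) pi0 e eqxx.
    rewrite !key; apply: E_perm => //; exact: h2.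
  + have e : forall (c0 : 'I_k.+1 -> 'I_n) v, upd c0 j v \o p = c0 \o p.
      move=> c0 v; apply: functional_extensionality => z; rewrite /upd /=.
      case: eqP => // e; move: hno; rewrite negb_exists => /forallP /(_ z); by rewrite e eqxx.
    rewrite !e; exact: E_mono (hE p ip).
Qed.

Lemma evalA (e : expr ar l k.+1) : exists d, forall t, (d <= t)%N -> forall nu mu,
  Rr t nu mu -> eval F G e nu = eval F H e mu.
Proof.
elim: e.
- move=> x y; exists 0 => t _ nu mu [[h _] _] /=; by have [-> _] := h x y.
- move=> x y; exists 0 => t _ nu mu [[h _] _] /=; by have [-> _] := h x y.
- move=> x y; exists 0 => t _ nu mu [[h _] _] /=; by have [_ ->] := h x y.
- move=> s x; exists 0 => t _ nu mu [[_ h] _] /=; by rewrite h.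
- move=> e1 [d1 h1] e2 [d2 h2]; exists (maxn d1 d2) => t le nu mu hR /=.
  rewrite geq_max in le; case/andP: le => l1 l2; by rewrite (h1 t l1 nu mu hR) (h2 t l2 nu mu hR).
- move=> e1 [d1 h1] e2 [d2 h2]; exists (maxn d1 d2) => t le nu mu hR /=.
  rewrite geq_max in le; case/andP: le => l1 l2; by rewrite (h1 t l1 nu mu hR) (h2 t l2 nu mu hR).
- move=> r e1 [d1 h1]; exists d1 => t le nu mu hR /=; by rewrite (h1 t le nu mu hR).
- move=> o args IH.
  have [df hdf] : exists df : 'I_(ar o) -> nat, forall j, forall t, (df j <= t)%N -> forall nu mu,
      Rr t nu mu -> eval F G (args j) nu = eval F H (args j) mu.
    exists (fun j => proj1_sig (constructive_indefinite_description _ (IH j))) => j.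
    exact: (proj2_sig (constructive_indefinite_description _ (IH j))).
  exists (\max_j df j) => t le nu mu hR /=; congr F; apply: functional_extensionality => j.
  apply: (hdf j t) => //; apply: leq_trans le; exact: leq_bigmax.
- move=> x e [d h]; exists d.+1 => t le nu mu hR /=.
  case: t le hR => // t le hR; have [s [bs hs]] := Rr_sum x hR.
  rewrite [RHS](reindex_inj (bij_inj bs)) /=; apply: eq_bigr => u _; apply: (h t) => //; exact: hs.
Qed.

End PartA.

Definition Reqb (x y : R) : bool := if Req_dec_T x y then true else false.
Lemma ReqbP x y : reflect (x = y) (Reqb x y).
Proof. rewrite /Reqb; case: Req_dec_T => h; by constructor. Qed.

Lemma mul_ind (a b : bool) :
  Rmult (if a then R1 else R0) (if b then R1 else R0) = if a && b then R1 else R0.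
Proof. case: a; case: b => /=; ring. Qed.

Section PartB0.
Variables (n l k : nat) (I : Type) (ar : I -> nat) (F : forall o : I, ('I_(ar o) -> R) -> R).
Variables (G H : graph n l).
Notation ex := (expr ar l k.+1).
Implicit Types (X : graph n l) (nu : 'I_k.+1 -> 'I_n).

Definition gr (b : bool) := if b then G else H.
Definition one : ex := EEq ar l ord0 ord0.
Definition prodE (s : seq ex) : ex := foldr (@EMul _ ar l _) one s.
Definition notE (e : ex) : ex := EAdd one (EScale (-1) e).
Definition bm (e : ex) (bb : bool) : ex := if bb then e else notE e.
Definition lagE (c : R) (L : seq R) (e : ex) : ex :=
  prodE [seq EScale (/ (c - d)) (EAdd e (EScale (- d) one)) | d <- filter (fun d => ~~ Reqb d c) L].
Definition memR x (L : seq R) := has (Reqb x) L.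

Lemma eval_one X nu : eval F X one nu = R1.
Proof. by rewrite /= eqxx. Qed.

Lemma ind_prod (A : Type) X nu (es : A -> ex) (P : A -> bool) (s : seq A) :
  (forall x, eval F X (es x) nu = if P x then R1 else R0) ->
  eval F X (prodE (map es s)) nu = if all P s then R1 else R0.
Proof.
move=> h; elim: s => [|x s IH] /=; first exact: eval_one.
by rewrite IH h mul_ind.
Qed.

Lemma ind_bm X nu e (b bb : bool) : eval F X e nu = (if b then R1 else R0) ->
  eval F X (bm e bb) nu = if b == bb then R1 else R0.
Proof.
rewrite /bm => h; case: bb; rewrite /= ?h ?eqxx; case: b {h} => /=; rewrite ?eqxx; ring.
Qed.

Lemma lag_spec X nu c L e : memR (eval F X e nu) L ->
  eval F X (lagE c L e) nu = if Reqb (eval F X e nu) c then R1 else R0.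
Proof.
rewrite /lagE; set x := eval F X e nu.
have fac : forall d, eval F X (EScale (/ (c - d)) (EAdd e (EScale (- d) one))) nu
    = Rmult (/ (c - d)) (Rplus x (Rmult (- d) R1)).
  by move=> d /=; rewrite eqxx.
case: (ReqbP x c) => [xc|xc] hm.
- have : forall L', all (fun d => ~~ Reqb d c) L' ->
    eval F X (prodE [seq EScale (/ (c - d)) (EAdd e (EScale (- d) one)) | d <- L']) nu = R1.
    elim => [|d L' IH] /=; first by rewrite eqxx.
    case/andP => /ReqbP dc hL; rewrite IH // eqxx -/x xc; field.
    by move=> h; apply: dc; lra.
  apply; exact: filter_all.
- have : forall L', has (Reqb x) L' ->
    eval F X (prodE [seq EScale (/ (c - d)) (EAdd e (EScale (- d) one)) | d <- filter (fun d => ~~ Reqb d c) L']) nu = R0.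
    elim => [|d L' IH] //= /orP [/ReqbP xd|hL].
    + rewrite -xd; case: (ReqbP x c) => // _ /=; rewrite eqxx -/x; ring.
    + case: ifP => _ /=; rewrite ?IH //; ring.
  by apply.
Qed.

Definition Lcol (s : 'I_l) : seq R := [seq col G u s | u <- enum 'I_n] ++ [seq col H u s | u <- enum 'I_n].

Definition atpInd m (X1 : graph n l) (c : 'I_m -> 'I_n) (g : 'I_m -> 'I_k.+1) : ex :=
  EMul (prodE [seq EMul (bm (EEq ar l (g ij.1) (g ij.2)) (c ij.1 == c ij.2))
                        (bm (EEdge ar l (g ij.1) (g ij.2)) (adj X1 (c ij.1) (c ij.2)))
              | ij <- enum {: 'I_m * 'I_m}])
       (prodE [seq lagE (col X1 (c js.1) js.2) (Lcol js.2) (ELab ar js.2 (g js.1))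
              | js <- enum {: 'I_m * 'I_l}]).

Lemma atpInd_spec m X1 (c : 'I_m -> 'I_n) g b nu :
  eval F (gr b) (atpInd X1 c g) nu = if tb (atp X1 c = atp (gr b) (nu \o g)) then R1 else R0.
Proof.
rewrite /atpInd [eval _ _ (EMul _ _) _]/=.
rewrite (ind_prod (P := fun ij : 'I_m * 'I_m =>
   ((nu (g ij.1) == nu (g ij.2)) == (c ij.1 == c ij.2)) &&
   (adj (gr b) (nu (g ij.1)) (nu (g ij.2)) == adj X1 (c ij.1) (c ij.2)))); last first.
  move=> ij /=; rewrite -mul_ind; congr Rmult; apply: ind_bm => //.
rewrite (ind_prod (P := fun js : 'I_m * 'I_l =>
   Reqb (col (gr b) (nu (g js.1)) js.2) (col X1 (c js.1) js.2))); last first.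
  move=> [i s] /=; rewrite lag_spec //= /memR has_cat !has_map.
  case: b => /=; [apply/orP; left|apply/orP; right]; apply/hasP; exists (nu (g i));
    by [rewrite -enumT mem_enum | apply/ReqbP].
rewrite mul_ind; congr (if _ then _ else _); symmetry; apply: tb_iff.
rewrite atp_atpP; split.
- move=> [h1 h2]; apply/andP; split; apply/allP => [[i j]] _ /=.
  + by have [-> ->] := h1 i j; rewrite !eqxx.
  + by apply/ReqbP; rewrite h2.
- case/andP => /allP h1 /allP h2; split.
  + move=> i j; have := h1 (i, j); rewrite mem_enum => /(_ isT) /andP [/eqP -> /eqP ->]; by [].
  + move=> i s; have := h2 (i, s); rewrite mem_enum => /(_ isT) /ReqbP ->; by [].
Qed.

End PartB0.

Lemma count_sum_mem (Z : finType) (a : pred Z) (s : seq Z) :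
  count a s = (\sum_(r | a r) count_mem r s)%N.
Proof.
elim: s => [|x s IH] /=; first by rewrite big1.
rewrite IH big_split /=; congr addn.
case: (boolP (a x)) => ax.
- rewrite (bigD1 x) //= eqxx big1 ?addn0 // => r /andP [_ rx]; by rewrite eq_sym (negbTE rx).
- rewrite big1 // => r ar; case: eqP => // e; by move: ax; rewrite e ar.
Qed.

Lemma class_bij (Z : finType) (eqv : rel Z) n (f1 f2 : 'I_n -> Z) :
  (forall z, eqv z z) -> (forall x y, eqv x y -> eqv y x) ->
  (forall x y z, eqv x y -> eqv y z -> eqv x z) ->
  (forall r, count (fun u => eqv r (f1 u)) (index_enum 'I_n) =
             count (fun u => eqv r (f2 u)) (index_enum 'I_n)) ->
  exists s : 'I_n -> 'I_n, bijective s /\ forall u, eqv (f1 u) (f2 (s u)).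
Proof.
move=> rf sy tr hc.
pose key z := nth z (enum Z) (find (fun r => eqv r z) (enum Z)).
have keyP : forall z, eqv (key z) z.
  move=> z; apply: (@nth_find _ z (fun r => eqv r z)); apply/hasP; exists z => //.
  by rewrite mem_enum.
have key_eq : forall x y, eqv x y -> key x = key y.
  move=> x y h; rewrite /key (eq_find (a2 := fun r => eqv r y)).
    rewrite (set_nth_default y) // -has_find; apply/hasP; exists y; by rewrite ?mem_enum.
  move=> r; apply/idP/idP => h'; [exact: tr h' h|exact: tr h' (sy _ _ h)].
have key_key : forall z, key (key z) = key z by move=> z; apply: key_eq.
have hc' : forall s : seq 'I_n, perm_eq s (index_enum 'I_n) -> forall r,
    count (fun u => eqv r (f1 u)) s = count (fun u => eqv r (f2 u)) s.
  move=> s ps r; by rewrite !(seq.permP ps).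
have hperm : perm_eq [seq key (f1 u) | u <- enum 'I_n] [seq key (f2 u) | u <- enum 'I_n].
  apply/seq.permP => a; rewrite !count_sum_mem; apply: eq_bigr => r _.
  rewrite !count_map.
  case: (eqVneq (key r) r) => kr.
  - have e : forall f : 'I_n -> Z, preim (fun u => key (f u)) (pred1 r) =1 (fun u => eqv r (f u)).
      move=> f u /=; apply/eqP/idP => [<-|h]; first exact: keyP.
      by rewrite -(key_eq _ _ h) kr.
    rewrite !(eq_count (e _)); apply: hc'.
    by rewrite /index_enum unlock.
  - have e : forall f : 'I_n -> Z, preim (fun u => key (f u)) (pred1 r) =1 pred0.
      move=> f u /=; apply/eqP => h; move: kr; by rewrite -h key_key eqxx.
    by rewrite !(eq_count (e _)) !count_pred0.
have : perm_eq [seq key (f1 u) | u <- enum 'I_n] [tuple key (f2 i) | i < n].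
  by [].  
case/tuple_permP => p hp.
have hp' : forall u, key (f1 u) = key (f2 (p u)).
  move=> u; have : u \in enum 'I_n by rewrite mem_enum.
  move: u; apply/eq_in_map; rewrite hp /=.
  apply: eq_map => i /=; by rewrite tnth_mktuple.
exists p; split; first exact: (injF_bij (@perm_inj _ p)).
move=> u; apply: tr (sy _ _ (keyP (f1 u))) _; rewrite hp'; exact: keyP.
Qed.

Lemma sumRind n (p : pred 'I_n) :
  \big[Rplus/R0]_(u : 'I_n) (if p u then R1 else R0) = INR (count p (index_enum 'I_n)).
Proof.
rewrite -sum1_count (big_morph INR (id1 := R0) (op1 := Rplus)) //; last first.
  move=> x y; exact: plus_INR.
by rewrite [RHS]big_mkcond.
Qed.

Lemma count_bij n (p : pred 'I_n) (s : 'I_n -> 'I_n) : bijective s ->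
  count (fun u => p (s u)) (index_enum 'I_n) = count p (index_enum 'I_n).
Proof.
move=> bs; rewrite -!sum1_count; symmetry; exact: (reindex_inj (bij_inj bs)).
Qed.

Lemma count_le n (p : pred 'I_n) : (count p (index_enum 'I_n) <= n)%N.
Proof.
rewrite -sum1_count sum1dep_card; apply: leq_trans (max_card _) _; by rewrite card_ord.
Qed.

Arguments atpInd : simpl never.
Arguments prodE : simpl never.
Arguments lagE : simpl never.

Lemma eval_ESum (I : Type) (ar : I -> nat) l F n m (X : graph n l) x (e : expr ar l m) nu :
  eval F X (ESum x e) nu = \big[Rplus/R0]_(v : 'I_n) eval F X e (upd nu x v).
Proof. by []. Qed.
Lemma eval_EMul (I : Type) (ar : I -> nat) l F n m (X : graph n l) (e1 e2 : expr ar l m) nu :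
  eval F X (EMul e1 e2) nu = Rmult (eval F X e1 nu) (eval F X e2 nu).
Proof. by []. Qed.

Section PartB2.
Variables (n l k : nat) (I : Type) (ar : I -> nat) (F : forall o : I, ('I_(ar o) -> R) -> R).
Variables (G H : graph n l).
Notation ex := (expr ar l k.+1).
Notation E := (@wl_eq n l k).
Notation gr := (gr G H).
Implicit Types (X : graph n l) (nu : 'I_k.+1 -> 'I_n).

Notation Zt := (bool * {ffun 'I_k -> 'I_n} * 'I_n)%type.

Definition tyeq t (T1 T2 : Zt) : Prop :=
  atp (gr T1.1.1) (snoc T1.1.2 T1.2) = atp (gr T2.1.1) (snoc T2.1.2 T2.2) /\
  forall i, E t (gr T1.1.1) (repl T1.1.2 i T1.2) (gr T2.1.1) (repl T2.1.2 i T2.2).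

Definition tyb t : rel Zt := fun T1 T2 => tb (tyeq t T1 T2).

Lemma tyb_refl t z : tyb t z z.
Proof. apply/tbP; split=> // i; exact: E_refl. Qed.
Lemma tyb_sym t x y : tyb t x y -> tyb t y x.
Proof. move/tbP => [h1 h2]; apply/tbP; split=> [|i]; [by rewrite h1|exact: E_sym]. Qed.
Lemma tyb_trans t x y z : tyb t x y -> tyb t y z -> tyb t x z.
Proof.
move/tbP => [h1 h2] /tbP [h1' h2']; apply/tbP; split=> [|i]; [by rewrite h1|exact: E_trans (h2 i) (h2' i)].
Qed.

Lemma ffK (f : 'I_k -> 'I_n) : (fun_of_fin (finfun f) : 'I_k -> 'I_n) = f.
Proof. apply: functional_extensionality => x; by rewrite ffunE. Qed.

Definition cnt t (T : Zt) b (c : 'I_k -> 'I_n) :=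
  count (fun u => tyb t T (b, finfun c, u)) (index_enum 'I_n).

Lemma E_succ_iff t b0 (a0 : 'I_k -> 'I_n) b (c : 'I_k -> 'I_n) :
  E t.+1 (gr b0) a0 (gr b) c <-> E t (gr b0) a0 (gr b) c /\ forall T, cnt t T b0 a0 = cnt t T b c.
Proof.
split.
- move=> /= [h [s [bs hs]]]; split=> // T; rewrite /cnt -[RHS](count_bij (fun u => tyb t T (b, finfun c, u)) bs).
  apply: eq_count => u; have hu : tyb t (b0, finfun a0, u) (b, finfun c, s u).
    by apply/tbP; rewrite /tyeq /= !ffK; exact: hs.
  apply/idP/idP => h'; [exact: tyb_trans h' hu|exact: tyb_trans h' (tyb_sym hu)].
- move=> [h hc] /=; split=> //.
  have [s [bs hs]] := class_bij (@tyb_refl t) (@tyb_sym t) (@tyb_trans t)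
     (f1 := fun u => (b0, finfun a0, u)) (f2 := fun u => (b, finfun c, u)) hc.
  exists s; split=> // u; have := hs u => /tbP; by rewrite /tyeq /= !ffK.
Qed.

Lemma chi_exists t : forall (b0 : bool) (a0 : 'I_k -> 'I_n) (f : 'I_k -> 'I_k.+1), injective f ->
  exists e : ex, forall b nu,
    eval F (gr b) e nu = if tb (E t (gr b0) a0 (gr b) (nu \o f)) then R1 else R0.
Proof.
elim: t => [|t IH] b0 a0 f fi.
  exists (atpInd ar G H (gr b0) a0 f) => b nu; exact: atpInd_spec.
have [chi hchi] : exists chi : bool -> ('I_k -> 'I_n) -> ('I_k -> 'I_k.+1) -> ex,
    forall b0 a0 f, injective f -> forall b nu,
    eval F (gr b) (chi b0 a0 f) nu = if tb (E t (gr b0) a0 (gr b) (nu \o f)) then R1 else R0.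
  have H0 : forall b0 a0 f, exists e : ex, injective f -> forall b nu,
      eval F (gr b) e nu = if tb (E t (gr b0) a0 (gr b) (nu \o f)) then R1 else R0.
    move=> b1 a1 f1; case: (classic (injective f1)) => hf.
    + have [e he] := IH b1 a1 f1 hf; by exists e.
    + by exists (one l k ar); move/hf.
  exists (fun b0 a0 f => proj1_sig (constructive_indefinite_description _ (H0 b0 a0 f))).
  move=> b1 a1 f1; exact: (proj2_sig (constructive_indefinite_description _ (H0 b1 a1 f1))).
have [z hz] := miss_codom fi.
pose g (i : 'I_k.+1) : 'I_k.+1 := if (insub (nat_of_ord i) : option 'I_k) is Some j then f j else z.
pose fi' (i : 'I_k) (j : 'I_k) : 'I_k.+1 := if j == i then z else f j.
have fi'_inj : forall i, injective (fi' i).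
  move=> i x y; rewrite /fi'; case: (eqVneq x i) => [->|xi]; case: (eqVneq y i) => [->|yi] //.
  + by move=> e; move: (hz y); rewrite e eqxx.
  + by move=> e; move: (hz x); rewrite e eqxx.
  + exact: fi.
pose cntE (T : Zt) : ex := ESum z (EMul (atpInd ar G H (gr T.1.1) (snoc T.1.2 T.2) g)
    (prodE [seq chi T.1.1 (repl T.1.2 i T.2) (fi' i) | i <- enum 'I_k])).
have cntE_spec : forall T b nu, eval F (gr b) (cntE T) nu = INR (cnt t T b (nu \o f)).
  move=> T b nu; rewrite /cntE eval_ESum -sumRind; apply: eq_bigr => u _; rewrite eval_EMul.
  have eg : upd nu z u \o g = snoc (nu \o f) u.
    apply: functional_extensionality => i; rewrite /g /snoc /upd /=.
    case: insubP => [j _ _|_]; last by rewrite eqxx.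
    by rewrite (negbTE (hz j)).
  have ef : forall i, upd nu z u \o fi' i = repl (nu \o f) i u.
    move=> i; apply: functional_extensionality => j; rewrite /fi' /repl /upd /=.
    case: (j == i); first by rewrite eqxx.
    by rewrite (negbTE (hz j)).
  rewrite atpInd_spec eg (ind_prod (P := fun i => tb (E t (gr T.1.1) (repl T.1.2 i T.2) (gr b) (repl (nu \o f) i u)))); last first.
    by move=> i; rewrite hchi // ef.
  rewrite mul_ind; congr (if _ then _ else _).
  rewrite /tyb; symmetry; apply: tb_iff; rewrite /tyeq /= ffK; split.
  + move=> [h1 h2]; apply/andP; split; first by apply/tbP.
    by apply/allP => i _; apply/tbP.
  + case/andP => /tbP h1 /allP h2; split=> // i; apply/tbP; apply: h2; by rewrite mem_enum.
pose Lcnt := [seq INR i | i <- iota 0 n.+1].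
exists (EMul (chi b0 a0 f) (prodE [seq lagE (INR (cnt t T b0 a0)) Lcnt (cntE T) | T <- enum {: Zt}])).
move=> b nu; rewrite eval_EMul hchi //.
rewrite (ind_prod (P := fun T => Reqb (INR (cnt t T b (nu \o f))) (INR (cnt t T b0 a0)))); last first.
  move=> T; rewrite lag_spec cntE_spec //; rewrite /memR has_map; apply/hasP.
  exists (cnt t T b (nu \o f)); last by apply/ReqbP.
  by rewrite mem_iota /= add0n ltnS count_le.
rewrite mul_ind; congr (if _ then _ else _); symmetry; apply: tb_iff.
rewrite E_succ_iff; split.
- move=> [h1 h2]; apply/andP; split; first by apply/tbP.
  by apply/allP => T _; apply/ReqbP; rewrite h2.
- case/andP => /tbP h1 /allP h2; split=> // T.
  have := h2 T; rewrite mem_enum => /(_ isT) /ReqbP /INR_eq; by move->.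
Qed.

End PartB2.

Section Wrap.
Variables (n l k : nat) (I : Type) (ar : I -> nat) (F : forall o : I, ('I_(ar o) -> R) -> R).
Notation ex := (expr ar l k.+1).

Definition Wr (chi : ex) (xs : seq 'I_k.+1) : ex :=
  foldr (fun x acc => ESum x (EMul (EEq ar l ord0 x) acc)) chi xs.

Lemma eval_Wr (X : graph n l) chi xs v : all (fun x => x != ord0) xs ->
  eval F X (Wr chi xs) (fun _ => v) = eval F X chi (fun _ => v).
Proof.
elim: xs => [|x xs IH] //= /andP [x0 hxs].
rewrite (big_only1 v) //.
- rewrite /upd.
  have -> : (if ord0 == x then v else v) = v by case: ifP.
  have -> : (fun z : 'I_k.+1 => if z == x then v else v) = (fun _ => v).
    by apply: functional_extensionality => z; case: ifP.
  rewrite IH // !eqxx; ring.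
- move=> u uv _; rewrite /upd eqxx.
  have -> : (if ord0 == x then u else v) = v by rewrite eq_sym (negbTE x0).
  case: eqP => [e|_]; first by move: uv; rewrite e eqxx.
  ring.
Qed.

Lemma free_Wr chi xs z : freeb (Wr chi xs) z -> (z == ord0) || (z \notin xs).
Proof.
elim: xs => [|x xs IH] /=; first by rewrite orbT.
case/andP => zx /orP [/orP [->//|/eqP e]|/IH]; first by move: zx; rewrite e eqxx.
by rewrite in_cons negb_or zx.
Qed.

End Wrap.

Theorem theorem1 (n l : nat) (hn : (1 <= n)%N) (hl : (1 <= l)%N) (k : nat) (hk : (1 <= k)%N)
  (I : Type) (ar : I -> nat) (har : forall o, (0 < ar o)%N)
  (F : forall o : I, ('I_(ar o) -> R) -> R) :
  forall (G H : graph n l) (v w : 'I_n),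
    vwl_inf_eq k G v H w <-> TL_eq F k G v H w.
Proof.
move=> G H v w; split.
- move=> hv e _.
  have [d hd] := evalA F G H e.
  apply: (hd d (leqnn d)); split.
  + have := hv 0 => /= /atp_atpP [_ hc]; split=> [i j|i s] /=.
    * by rewrite !eqxx !adj_irr.
    * exact: (hc (Ordinal hk) s).
  + move=> p _; exact: hv.
- move=> hT t.
  have f0i : injective (widen_ord (leqnSn k)).
    by move=> x y /(congr1 val) /= /val_inj.
  have [chi hchi] := chi_exists F G H t true (fun _ => v) f0i.
  pose xs := [seq i <- enum 'I_k.+1 | i != ord0].
  have hxs : all (fun x => x != ord0) xs by apply/allP => x; rewrite mem_filter => /andP [].
  have hf : forall z, freeb (Wr chi xs) z -> z == ord0.
    move=> z /free_Wr /orP [//|]; by rewrite mem_filter mem_enum andbT negbK.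
  have := hT _ hf; rewrite !eval_Wr // (hchi true) (hchi false) /=.
  case: tbP => [_|h]; last by case: h; exact: E_refl.
  case: tbP => [h' _|_ e]; first exact: h'.
  by exfalso; apply: R1_neq_R0.
Qed.
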